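(* Let $d$ be a premetric with open balls on a topological space $X$, and let $A\subset X$ be non-empty. Then the following are equivalent: (1) $\overline d_A=\overline d^\circ_A$; (2) $\overline d_A$ is continuous; (3) $\overline d^\circ_A$ is continuous. Moreover, the following two conditions are equivalent and imply (1)–(3): (4) $d_A$ is continuous; (5) $\overline d_A=\overline d^\circ_A=d_A$.
   Context: A premetric on $X$ is $d:X\times X\to[0,\infty)$ with $d(x,x)=0$. $B_d(x,\varepsilon)=\{y:d(x,y)<\varepsilon\}$, $B_d(A,\varepsilon)=\bigcup_{a\in A}B_d(a,\varepsilon)$; $d$ has open balls if every $B_d(x,\varepsilon)$ is open in $X$. For non-empty $A\subset X$ and $x\in X$: $d_A(x)=\inf\{\varepsilon>0:x\in B_d(A,\varepsilon)\}$, $\overline d_A(x)=\inf\{\varepsilon>0:x\in\overline{B_d(A,\varepsilon)}\}$, $\overline d^\circ_A(x)=\inf\{\varepsilon>0:x\in B_d(A,\varepsilon)\cup\mathrm{int}\,\overline{B_d(A,\varepsilon)}\}$. *)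

(* Defs.v *)
From HB Require Import structures.
From mathcomp Require Import all_boot all_order all_algebra.
From mathcomp Require Import all_classical all_reals all_analysis.
Set Implicit Arguments. Unset Strict Implicit. Unset Printing Implicit Defensive.
Import Order.TTheory GRing.Theory Num.Theory.
Local Open Scope classical_set_scope.
Local Open Scope ring_scope.

Definition premetric (R : realType) (X : Type) (d : X -> X -> R) : Prop :=
  (forall x y, 0 <= d x y) /\ (forall x, d x x = 0).

Definition pball (R : realType) (X : Type) (d : X -> X -> R) (x : X) (e : R)
  : set X := [set y | d x y < e].

Definition pballA (R : realType) (X : Type) (d : X -> X -> R) (A : set X) (e : R)
  : set X := \bigcup_(a in A) pball d a e.

Definition has_open_balls (R : realType) (X : topologicalType)
  (d : X -> X -> R) : Prop :=
  forall (x : X) (e : R), open (pball d x e).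

Definition distA (R : realType) (X : Type) (d : X -> X -> R) (A : set X)
  (x : X) : R := inf [set e : R | 0 < e /\ pballA d A e x].

Definition cdistA (R : realType) (X : topologicalType) (d : X -> X -> R)
  (A : set X) (x : X) : R :=
  inf [set e : R | 0 < e /\ closure (pballA d A e) x].

Definition cidistA (R : realType) (X : topologicalType) (d : X -> X -> R)
  (A : set X) (x : X) : R :=
  inf [set e : R | 0 < e /\
         (pballA d A e `|` interior (closure (pballA d A e))) x].

(* Main.v *)
Require Import Defs.
From HB Require Import structures.
From mathcomp Require Import all_boot all_order all_algebra.
From mathcomp Require Import all_classical all_reals all_analysis.
Import Order.TTheory GRing.Theory Num.Theory.
Import numFieldTopology.Exports numFieldNormedType.Exports.
Local Open Scope classical_set_scope.
Local Open Scope ring_scope.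

Section Aux.
Variables (R : realType) (X : topologicalType).

Definition usc (f : X -> R) := forall x r, f x < r -> \forall y \near x, f y < r.
Definition lsc (f : X -> R) := forall x r, r < f x -> \forall y \near x, r < f y.

Lemma inf_le_mem (S : set R) e : (forall e, S e -> 0 < e) -> S e -> inf S <= e.
Proof.
move=> Hp Se; apply: (ge_inf _) Se.
by exists 0 => y /Hp /ltW.
Qed.

Lemma cont_usc f : continuous f -> usc f.
Proof. by move=> hf x r H; exact: (cvgr_lt (f x) (hf x) r H). Qed.

Lemma cont_lsc f : continuous f -> lsc f.
Proof. by move=> hf x r H; exact: (cvgr_gt (f x) (hf x) r H). Qed.

Lemma usc_lsc_cont f : usc f -> lsc f -> continuous f.
Proof.
move=> hu hl x; apply/cvgrPdist_lt => eps e0.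
have h1 := hu x (f x + eps) ltac:(by rewrite ltrDl).
have h2 := hl x (f x - eps) ltac:(by rewrite ltrBlDr ltrDl).
apply: filterS2 h1 h2 => y a b.
by rewrite ltr_distlC b a.
Qed.
End Aux.
Arguments usc {R X}. Arguments lsc {R X}.
Arguments cont_usc {R X f}. Arguments cont_lsc {R X f}. Arguments usc_lsc_cont {R X f}.
Arguments inf_le_mem {R S e}.

Section Main.
Variables (R : realType) (X : topologicalType) (d : X -> X -> R) (A : set X).
Hypotheses (hd : premetric d) (hob : has_open_balls d) (hA : A !=set0).

Let U e := pballA d A e.

Lemma U_mono e e' : e <= e' -> U e `<=` U e'.
Proof.
move=> ee' x [a Aa /= dax]; exists a => //.
by rewrite /pball /=; apply: lt_le_trans ee'.
Qed.

Lemma U_ex y : exists e, 0 < e /\ U e y.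
Proof.
case: hA => a Aa; exists (d a y + 1); split.
  by apply: lt_le_trans (ltr01) _; rewrite lerDr; case: hd.
by exists a => //; rewrite /pball /= ltrDl.
Qed.

Lemma U_open e : open (U e).
Proof. by apply: bigcup_open => a _; apply: hob. Qed.

Lemma usc_of (O : R -> set X) : (forall e, open (O e)) ->
  (forall y, exists e, 0 < e /\ O e y) ->
  usc (fun x => inf [set e | 0 < e /\ O e x]).
Proof.
move=> Oo Oex x r /=.
case: (Oex x) => e0 [e00 Oe0] H.
have [e [e0' Oe] er] := inf_lt (ex_intro _ e0 (conj e00 Oe0)) H.
apply: filterS (open_nbhs_nbhs (conj (Oo e) Oe)) => y Oy.
by apply: le_lt_trans er; apply: inf_le_mem => //; move=> ? [].
Qed.

Lemma usc3 : usc (distA d A).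
Proof. by apply: usc_of; [exact: U_open | exact: U_ex]. Qed.

Lemma usc2 : usc (cidistA d A).
Proof.
apply: usc_of.
  by move=> e; apply: openU; [exact: U_open | exact: open_interior].
by move=> y; case: (U_ex y) => e [e0 Ue]; exists e; split => //; left.
Qed.

Lemma S2_ex y : [set e | 0 < e /\ closure (pballA d A e) y] !=set0.
Proof. by case: (U_ex y) => e [e0 Ue]; exists e; split => //; apply: subset_closure. Qed.

Lemma le12 x : cdistA d A x <= cidistA d A x.
Proof.
apply: lb_le_inf.
  by case: (U_ex x) => e [e0 Ue]; exists e; split => //; left.
move=> e [e0 [Ue|Ie]]; apply: inf_le_mem; try by move=> ? [].
- by split => //; apply: subset_closure.
- by split => //; apply: nbhs_singleton.
Qed.

Lemma le23 x : cidistA d A x <= distA d A x.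
Proof.
apply: lb_le_inf; first by case: (U_ex x) => e [e0 Ue]; exists e.
move=> e [e0 Ue]; apply: inf_le_mem; first by move=> ? [].
by split => //; left.
Qed.

Lemma lsc1 : lsc (cdistA d A).
Proof.
move=> x r H.
set s := (r + cdistA d A x) / 2.
have [rs sx] := midf_lt H.
have nCx : ~ closure (U s) x.
  move=> Cx.
  have [z [[a Aa daz] _]] := Cx setT filterT.
  have s0 : 0 < s by apply: le_lt_trans daz; case: hd.
  have : cdistA d A x <= s by apply: inf_le_mem; [move=> ? [] | split].
  by rewrite leNgt sx.
have hn : nbhs x (~` closure (U s)).
  by apply: open_nbhs_nbhs; split => //; apply: closed_openC; exact: closed_closure.
apply: filterS hn => y nCy; apply: lt_le_trans rs _.
apply: lb_le_inf; first exact: S2_ex.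
move=> e [e0 Ce]; rewrite leNgt; apply/negP => es.
by apply: nCy; apply: (@closureS _ _ _ (U_mono _ _ (ltW es))).
Qed.

Lemma K (g : X -> R) : lsc g -> (forall e y, 0 < e -> U e y -> g y <= e) ->
  forall x, g x <= cdistA d A x.
Proof.
move=> hl hg x; rewrite leNgt; apply/negP => H.
have [e [e0 Ce] eg] := inf_lt (S2_ex x) H.
have [z [Uz ez]] := Ce _ (hl x e eg).
by move: (hg e z e0 Uz); rewrite leNgt ez.
Qed.

Lemma M : usc (cdistA d A) -> forall x, cidistA d A x <= cdistA d A x.
Proof.
move=> hu x; rewrite leNgt; apply/negP => H.
set r := (cdistA d A x + cidistA d A x) / 2.
have [r1 r2] := midf_lt H.
have r0 : 0 < r.
  apply: le_lt_trans r1; apply: lb_le_inf; first exact: S2_ex.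
  by move=> ? [/ltW].
have Ir : interior (closure (U r)) x.
  apply: filterS (hu x r r1) => y hy.
  have [e [e0 Ce] er] := inf_lt (S2_ex y) hy.
  exact: (@closureS _ _ _ (U_mono _ _ (ltW er))).
have : cidistA d A x <= r.
  by apply: inf_le_mem; [move=> ? [] | split => //; right].
by rewrite leNgt r2.
Qed.

End Main.
Arguments M {R X d A}. Arguments K {R X d A}. Arguments le12 {R X d A}. Arguments le23 {R X d A}.
Arguments usc2 {R X d A}. Arguments usc3 {R X d A}. Arguments lsc1 {R X d A}.

Theorem proposition1p2 (R : realType) (X : topologicalType)
  (d : X -> X -> R) (A : set X) :
  premetric d -> has_open_balls d -> A !=set0 ->
  ((cdistA d A = cidistA d A <-> continuous (cdistA d A : X -> R)) /\
   (continuous (cdistA d A : X -> R) <-> continuous (cidistA d A : X -> R))) /\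
  ((continuous (distA d A : X -> R) <-> (cdistA d A = cidistA d A /\ cidistA d A = distA d A)) /\
   (continuous (distA d A : X -> R) ->
      [/\ cdistA d A = cidistA d A, continuous (cdistA d A : X -> R)
        & continuous (cidistA d A : X -> R)])).
Proof.
move=> hd hob hA.
have c12 : continuous (cdistA d A) -> cdistA d A = cidistA d A.
  move=> hc; apply: funext => x; apply/le_anti/andP; split.
    exact: (le12 hd hA).
  exact: (M hd hA (cont_usc hc)).
have c1 : cdistA d A = cidistA d A -> continuous (cdistA d A).
  move=> e; apply: usc_lsc_cont; last exact: (lsc1 hd hA).
  by rewrite e; exact: (usc2 hd hob hA).
have g2 : continuous (cidistA d A) -> cdistA d A = cidistA d A.
  move=> hc; apply: funext => x; apply/le_anti/andP; split.
    exact: (le12 hd hA).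
  apply: (K hd hA _ (cont_lsc hc)) => e y e0 Ue.
  by apply: inf_le_mem; [move=> ? [] | split => //; left].
have h4 : continuous (distA d A) ->
    cdistA d A = cidistA d A /\ cidistA d A = distA d A.
  move=> hc.
  have K3 : forall x, distA d A x <= cdistA d A x.
    apply: (K hd hA _ (cont_lsc hc)) => e y e0 Ue.
    by apply: inf_le_mem; [move=> ? [] | split].
  split; apply: funext => x; apply/le_anti/andP; split.
  - exact: (le12 hd hA).
  - exact: le_trans (le23 hd hA x) (K3 x).
  - exact: (le23 hd hA).
  - exact: le_trans (K3 x) (le12 hd hA x).
split; [split|split].
- by split; [exact: c1 | exact: c12].
- split => hc; last by apply: c1; exact: g2.
  by rewrite -(c12 hc).
- split; first exact: h4.
  move=> [e1 e2]; apply: usc_lsc_cont; first exact: (usc3 hd hob hA).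
  by rewrite -e2 -e1; exact: (lsc1 hd hA).
- move=> hc; have [e1 e2] := h4 hc.
  split => //; first by rewrite e1 e2.
  by rewrite e2.
Qed.
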